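(* Let $X$ be a countable infinite set, $\mathcal{I}$ a $q^+$ and hereditarily meager ideal on $X$, and $\tau$ an $\mathcal{I}$-crowded topology on $X$ with $w(\tau)<\mathfrak{m}_c$. If $\langle F_i:i\in\omega\rangle$ is a sequence of pairwise disjoint finite subsets of $X$ such that $\bigcup_{i\in\omega}F_i$ is $(\mathcal{I},\tau)$-crowded, then there is an $(\mathcal{I},\tau)$-crowded $S\subseteq\bigcup_{i\in\omega}F_i$ such that $|S\cap F_i|\le 1$ for each $i$ and $cl_\tau(S)=cl_\tau(\bigcup_{i\in\omega}F_i)$.
   Context: An ideal on $X$ is a family of subsets of $X$ closed under subsets and finite unions; all ideals are assumed proper ($X\notin\mathcal{I}$) and free (every finite subset of $X$ is in $\mathcal{I}$). $\mathcal{I}^+=\mathcal{P}(X)\setminus\mathcal{I}$. Subsets of $X$ are identified with points of $2^X$. $\mathcal{I}$ is hereditarily meager if for every $A\in\mathcal{I}^+$, $\mathcal{I}\cap\mathcal{P}(A)$ is meager in $2^A$. $\mathcal{I}$ is $q^+$ if for every $A\in\mathcal{I}^+$ and every partition $(F_n)_n$ of $A$ into finite sets there is $S\subseteq A$ with $S\in\mathcal{I}^+$ and $|S\cap F_n|\le1$ for all $n$. A topology $\tau$ on $X$ is $\mathcal{I}$-crowded if $\tau\cap\mathcal{I}=\{\emptyset\}$. A set $A\subseteq X$ is $(\mathcal{I},\tau)$-crowded if for every $U\in\tau$, $A\cap U$ is either empty or in $\mathcal{I}^+$. $\mathfrak{m}_c$ is the least cardinal $\kappa$ such that MA$(\kappa)$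 for countable posets fails. $w$ denotes weight. *)

(* Defs.v *)
From Stdlib Require Import List Classical.
Import ListNotations.

Section Defs.
Variable X : Type.

Definition subset (A B : X -> Prop) : Prop := forall x, A x -> B x.
Definition inter (A B : X -> Prop) : X -> Prop := fun x => A x /\ B x.
Definition union2 (A B : X -> Prop) : X -> Prop := fun x => A x \/ B x.
Definition is_empty (A : X -> Prop) : Prop := forall x, ~ A x.
Definition finite (A : X -> Prop) : Prop :=
  exists l : list X, forall x, A x -> In x l.

Definition countably_infinite : Prop :=
  exists f : nat -> X, (forall m n, f m = f n -> m = n) /\ (forall x, exists n, f n = x).

Definition is_ideal (I : (X -> Prop) -> Prop) : Prop :=
  (forall A B, subset B A -> I A -> I B) /\
  (forall A B, I A -> I B -> I (union2 A B)) /\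
  ~ I (fun _ => True) /\
  (forall A, finite A -> I A).

Definition positive (I : (X -> Prop) -> Prop) (A : X -> Prop) : Prop := ~ I A.

(* The Cantor space 2^A: its points are the subsets B of A.
   Basic clopen sets are given by finite disjoint s, t ⊆ A:
   [s,t] = { B ⊆ A | s ⊆ B and t ∩ B = ∅ } (nonempty exactly when s,t disjoint). *)
Definition basic_cond (A : X -> Prop) (s t : list X) : Prop :=
  (forall x, In x s -> A x) /\ (forall x, In x t -> A x) /\
  (forall x, In x s -> ~ In x t).

Definition in_basic (s t : list X) (B : X -> Prop) : Prop :=
  (forall x, In x s -> B x) /\ (forall x, In x t -> ~ B x).

Definition nowhere_dense_in (A : X -> Prop) (N : (X -> Prop) -> Prop) : Prop :=
  forall s t, basic_cond A s t ->
    exists s' t', basic_cond A s' t' /\ incl s s' /\ incl t t' /\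
      forall B, subset B A -> in_basic s' t' B -> ~ N B.

Definition meager_in (A : X -> Prop) (F : (X -> Prop) -> Prop) : Prop :=
  exists N : nat -> ((X -> Prop) -> Prop),
    (forall n, nowhere_dense_in A (N n)) /\
    (forall B, subset B A -> F B -> exists n, N n B).

Definition hereditarily_meager (I : (X -> Prop) -> Prop) : Prop :=
  forall A, positive I A -> meager_in A (fun B => I B /\ subset B A).

Definition pairwise_disjoint (F : nat -> X -> Prop) : Prop :=
  forall i j x, i <> j -> F i x -> F j x -> False.

Definition big_union (F : nat -> X -> Prop) : X -> Prop := fun x => exists i, F i x.

Definition selector (S : X -> Prop) (F : nat -> X -> Prop) : Prop :=
  forall i x y, S x -> F i x -> S y -> F i y -> x = y.

Definition q_plus (I : (X -> Prop) -> Prop) : Prop :=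
  forall A, positive I A ->
  forall F : nat -> X -> Prop,
    (forall n, finite (F n)) -> pairwise_disjoint F ->
    (forall x, A x <-> big_union F x) ->
    exists S, subset S A /\ positive I S /\ selector S F.

Definition is_topology (tau : (X -> Prop) -> Prop) : Prop :=
  tau (fun _ => True) /\
  (forall U V, tau U -> tau V -> tau (inter U V)) /\
  (forall Fam : (X -> Prop) -> Prop, (forall U, Fam U -> tau U) ->
     tau (fun x => exists U, Fam U /\ U x)).

Definition I_crowded_topology (I tau : (X -> Prop) -> Prop) : Prop :=
  forall U, tau U -> I U -> is_empty U.

Definition I_tau_crowded (I tau : (X -> Prop) -> Prop) (A : X -> Prop) : Prop :=
  forall U, tau U -> is_empty (inter A U) \/ positive I (inter A U).

Definition closure (tau : (X -> Prop) -> Prop) (A : X -> Prop) : X -> Prop :=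
  fun x => forall U, tau U -> U x -> exists y, U y /\ A y.

Definition is_base (tau : (X -> Prop) -> Prop) (K : Type) (B : K -> X -> Prop) : Prop :=
  (forall k, tau (B k)) /\
  (forall U x, tau U -> U x -> exists k, B k x /\ subset (B k) U).

End Defs.

Arguments subset {X}. Arguments inter {X}. Arguments union2 {X}.
Arguments is_empty {X}. Arguments finite {X}. Arguments is_ideal {X}.
Arguments positive {X}. Arguments hereditarily_meager {X}.
Arguments pairwise_disjoint {X}. Arguments big_union {X}. Arguments selector {X}.
Arguments q_plus {X}. Arguments is_topology {X}. Arguments I_crowded_topology {X}.
Arguments I_tau_crowded {X}. Arguments closure {X}. Arguments is_base {X}.
Arguments basic_cond {X}. Arguments in_basic {X}. Arguments nowhere_dense_in {X}.
Arguments meager_in {X}.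

Definition MA_countable (K : Type) : Prop :=
  forall (P : Type) (le : P -> P -> Prop),
    inhabited P ->
    (exists f : P -> nat, forall p q, f p = f q -> p = q) ->
    (forall p, le p p) ->
    (forall p q r, le p q -> le q r -> le p r) ->
    (forall p q, le p q -> le q p -> p = q) ->
    forall D : K -> P -> Prop,
      (forall k p, exists q, le q p /\ D k q) ->
      exists G : P -> Prop,
        (exists p, G p) /\
        (forall p q, G p -> le p q -> G q) /\
        (forall p q, G p -> G q -> exists r, G r /\ le r p /\ le r q) /\
        (forall k, exists p, G p /\ D k p).

(* |K| < m_c, where m_c is the least cardinal kappa for which MA(kappa) for
   countable posets fails: every cardinal <= |K| satisfies MA. *)
Definition below_mc (K : Type) : Prop :=
  forall (K' : Type) (f : K' -> K), (forall a b, f a = f b -> a = b) -> MA_countable K'.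

Definition weight_below_mc {X : Type} (tau : (X -> Prop) -> Prop) : Prop :=
  exists (K : Type) (B : K -> X -> Prop), is_base tau K B /\ below_mc K.

(* Main.v *)
Require Import Defs.
From Stdlib Require Import List Classical ClassicalEpsilon FunctionalExtensionality PropExtensionality ProofIrrelevance Arith Lia Cantor.
From mathcomp Require classical_sets.
Import ListNotations.

Lemma zorn_plain (T:Type) (P : (T->Prop)->Prop) :
  (forall Fam : (T->Prop)->Prop, (forall A, Fam A -> P A) ->
     (forall A B, Fam A -> Fam B -> (forall x, A x -> B x) \/ (forall x, B x -> A x)) ->
     P (fun x => exists A, Fam A /\ A x)) ->
  exists A, P A /\ forall B, (forall x, A x -> B x) -> ~ (forall x, B x -> A x) -> ~ P B.
Proof.
  intros H.
  destruct (@classical_sets.Zorn_bigcup T P) as [A [HA HB]].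
  - intros Fam H1 H2.
    assert (E : classical_sets.bigcup Fam (fun X => X) = (fun x => exists A, Fam A /\ A x)).
    { apply functional_extensionality; intro x; apply propositional_extensionality.
      unfold classical_sets.bigcup, classical_sets.mkset; split.
      - intros [i Hi Hx]; eauto.
      - intros [i [Hi Hx]]; econstructor; eauto. }
    rewrite E. apply H; auto.
  - exists A; split; auto. intros B H1 H2 H3. apply (HB B); auto. split; auto.
Qed.

Definition inj {A B} (f : A -> B) := forall x y, f x = f y -> x = y.

Lemma inf_seq (K:Type) (L : K -> Prop) :
  (forall l : list K, exists k, L k /\ ~ In k l) ->
  exists e : nat -> K, inj e /\ forall n, L (e n).
Proof.
  intros H.
  pose (pick := fun l => proj1_sig (constructive_indefinite_description _ (H l))).
  assert (Hp : forall l, L (pick l) /\ ~ In (pick l) l).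
  { intro l. unfold pick. destruct (constructive_indefinite_description _ (H l)); auto. }
  pose (f := fix f n := match n with 0 => [] | S m => pick (f m) :: f m end).
  exists (fun n => pick (f n)). split.
  - assert (Hin : forall m n, m < n -> In (pick (f m)) (f n)).
    { intros m n; induction n; intros Hmn; [lia|].
      simpl. destruct (Nat.eq_dec m n); [subst; left; auto| right; apply IHn; lia]. }
    intros x y Hxy. destruct (Nat.lt_total x y) as [h|[h|h]]; auto.
    + exfalso. apply (proj2 (Hp (f y))). rewrite <- Hxy. apply Hin; auto.
    + exfalso. apply (proj2 (Hp (f x))). rewrite Hxy. apply Hin; auto.
  - intro n; apply Hp.
Qed.

Lemma dichotomy (K : Type) :
  (exists f : K -> nat, inj f) \/ (exists f : K * nat -> K, inj f).
Proof.
  set (P := fun M : (nat -> K) -> Prop =>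
     (forall e, M e -> inj e) /\
     (forall e e' i j, M e -> M e' -> e i = e' j -> e = e')).
  destruct (zorn_plain _ P) as [M [[HMi HMd] Hmax]].
  { intros Fam HF Htot. split.
    - intros e [A [HA He]]. apply (HF A HA); auto.
    - intros e e' i j [A [HA He]] [B [HB He']] Heq.
      destruct (Htot A B HA HB) as [h|h].
      + apply (proj2 (HF B HB) e e' i j); auto.
      + apply (proj2 (HF A HA) e e' i j); auto. }
  set (L := fun k => ~ exists e i, M e /\ e i = k).
  assert (HL : exists l, forall k, L k -> In k l).
  { apply NNPP; intro Hn.
    destruct (inf_seq K L) as [e [He HeL]].
    { intro l. apply NNPP; intro H2. apply Hn. exists l. intros k Hk.
      apply NNPP; intro H3. apply H2; eauto. }
    apply (Hmax (fun e' => M e' \/ e' = e)).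
    - auto.
    - intro H. specialize (H e (or_intror eq_refl)).
      apply (HeL 0). exists e, 0; auto.
    - split.
      + intros e' [h|h]; [auto| subst; auto].
      + intros e1 e2 i j [h1|h1] [h2|h2] Heq.
        * eauto.
        * exfalso. subst e2. apply (HeL j). exists e1, i; auto.
        * exfalso. subst e1. apply (HeL i). exists e2, j; auto.
        * congruence. }
  destruct HL as [l Hl].
  destruct (classic (exists e0, M e0)) as [[e0 He0]|Hno].
  - right.
    assert (Hidx : forall k, L k -> exists j, nth_error l j = Some k).
    { intros k Hk. apply In_nth_error; auto. }
    assert (conv : forall k, (exists e i, M e /\ e i = k) -> exists p : (nat -> K) * nat, M (fst p) /\ fst p (snd p) = k).
    { intros k [e [i H]]. exists (e, i); auto. }
    pose (f := fun p : K * nat =>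
      let (k, n) := p in
      match excluded_middle_informative (exists e i, M e /\ e i = k) with
      | left H =>
        let q := proj1_sig (constructive_indefinite_description _ (conv k H)) in
        fst q (2 * to_nat (snd q, n))
      | right H =>
        let j := proj1_sig (constructive_indefinite_description _ (Hidx k H)) in
        e0 (S (2 * to_nat (j, n)))
      end).
    exists f. intros [k n] [k' n']. unfold f.
    destruct (excluded_middle_informative (exists e i, M e /\ e i = k)) as [H1|H1];
    destruct (excluded_middle_informative (exists e i, M e /\ e i = k')) as [H2|H2].
    + destruct (constructive_indefinite_description _ (conv k H1)) as [[e i] [HMe Hei]].
      destruct (constructive_indefinite_description _ (conv k' H2)) as [[e' i'] [HMe' Hei']].
      cbn [proj1_sig fst snd] in *.
      intro Heq. assert (e = e') by (eapply HMd; eauto). subst e'.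
      apply (HMi e HMe) in Heq.
      assert (to_nat (i, n) = to_nat (i', n')) by lia.
      assert (E : (i, n) = (i', n')).
      { rewrite <- (cancel_of_to (i, n)), <- (cancel_of_to (i', n')). congruence. }
      inversion E; subst; auto.
    + destruct (constructive_indefinite_description _ (conv k H1)) as [[e i] [HMe Hei]].
      destruct (constructive_indefinite_description _ (Hidx k' H2)) as [j Hj].
      cbn [proj1_sig fst snd] in *.
      intro Heq. assert (e = e0) by (eapply HMd; eauto). subst e.
      apply (HMi e0 He0) in Heq. lia.
    + destruct (constructive_indefinite_description _ (conv k' H2)) as [[e i] [HMe Hei]].
      destruct (constructive_indefinite_description _ (Hidx k H1)) as [j Hj].
      cbn [proj1_sig fst snd] in *.
      intro Heq. assert (e0 = e) by (eapply HMd; eauto). subst e.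
      apply (HMi e0 He0) in Heq. lia.
    + destruct (constructive_indefinite_description _ (Hidx k H1)) as [j Hj].
      destruct (constructive_indefinite_description _ (Hidx k' H2)) as [j' Hj'].
      cbn [proj1_sig fst snd] in *.
      intro Heq. apply (HMi e0 He0) in Heq.
      assert (to_nat (j, n) = to_nat (j', n')) by lia.
      assert (E : (j, n) = (j', n')).
      { rewrite <- (cancel_of_to (j, n)), <- (cancel_of_to (j', n')). congruence. }
      inversion E; subst. congruence.
  - left.
    assert (Hidx : forall k, exists j, nth_error l j = Some k).
    { intros k. apply In_nth_error; apply Hl. intros [e [i [He _]]]. apply Hno; eauto. }
    exists (fun k => proj1_sig (constructive_indefinite_description _ (Hidx k))).
    intros x y. destruct (constructive_indefinite_description _ (Hidx x)) as [j Hj].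
    destruct (constructive_indefinite_description _ (Hidx y)) as [j' Hj']. cbn [proj1_sig].
    intros; subst; congruence.
Qed.
Lemma RS (J : Type) : (exists f : J -> nat, inj f) -> MA_countable J.
Proof.
  intros [c Hc] P le [p0] _ Hrefl Htrans _ D HD.
  set (E := fun m p => forall j, c j = m -> D j p).
  assert (HE : forall m p, exists q, le q p /\ E m q).
  { intros m p. destruct (classic (exists j, c j = m)) as [[j Hj]|Hn].
    - destruct (HD j p) as [q [Hq1 Hq2]]. exists q; split; auto.
      intros j' Hj'. assert (j' = j) by (apply Hc; congruence). subst; auto.
    - exists p; split; auto. intros j Hj; exfalso; eauto. }
  pose (next := fun m p => proj1_sig (constructive_indefinite_description _ (HE m p))).
  assert (Hn : forall m p, le (next m p) p /\ E m (next m p)).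
  { intros m p; unfold next; destruct (constructive_indefinite_description _ (HE m p)); auto. }
  pose (sq := fix sq n := match n with 0 => p0 | S m => next m (sq m) end).
  assert (Hdec : forall m n, m <= n -> le (sq n) (sq m)).
  { intros m n H; induction H; auto. eapply Htrans; [apply Hn| auto]. }
  exists (fun q => exists m, le (sq m) q). split; [|split; [|split]].
  - exists p0, 0; auto.
  - intros p q [m Hm] H; exists m; apply (Htrans _ p); auto.
  - intros p q [m Hm] [m' Hm']. exists (sq (max m m')). split; [exists (max m m'); auto|split].
    + apply (Htrans _ (sq m)); [apply Hdec; lia| auto].
    + apply (Htrans _ (sq m')); [apply Hdec; lia| auto].
  - intro j. exists (sq (S (c j))). split; [exists (S (c j)); auto|].
    apply (proj2 (Hn (c j) (sq (c j)))). auto.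
Qed.
Lemma list_filter_ex {X} (l : list X) (Q : X -> Prop) :
  exists l', forall x, In x l' <-> In x l /\ Q x.
Proof.
  induction l as [|y l [l' Hl']].
  - exists []; simpl; tauto.
  - destruct (classic (Q y)).
    + exists (y :: l'); intro x; simpl; rewrite Hl'; split.
      * intros [->|H']; tauto.
      * intros [[->|H1] H2]; auto.
    + exists l'; intro x; simpl; rewrite Hl'; split.
      * tauto.
      * intros [[->|H1] H2]; [contradiction|auto].
Qed.

Lemma list_blocks_ex {X} (F : nat -> X -> Prop) (Fin : forall i, finite (F i))
  (Hd : pairwise_disjoint F) (l : list X) :
  exists l', forall x, (exists y i, In y l /\ F i y /\ F i x) -> In x l'.
Proof.
  induction l as [|y l [l' Hl']].
  - exists []; intros x [y [i [[] _]]].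
  - destruct (classic (exists i, F i y)) as [[i Hi]|Hn].
    + destruct (Fin i) as [li Hli].
      exists (li ++ l'). intros x [z [j [Hz [H1 H2]]]]. apply in_or_app.
      destruct Hz as [<-|Hz].
      * left. destruct (Nat.eq_dec i j) as [<-|Hij]; [auto|].
        exfalso; apply (Hd i j y); auto.
      * right; apply Hl'; eauto.
    + exists l'. intros x [z [j [[<-|Hz] [H1 H2]]]]; [exfalso; eauto|apply Hl'; eauto].
Qed.

Section Bits.
Context {X : Type} (h : X -> nat) (g : nat -> X) (hg : forall j, h (g j) = j) (gh : forall x, g (h x) = x).

Definition mem (a : nat) (x : X) : Prop := Nat.testbit a (h x) = true.

Lemma mem_finite a : finite (mem a).
Proof.
  exists (map g (seq 0 (S (Nat.log2 a)))). intros x Hx. unfold mem in Hx.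
  rewrite <- (gh x). apply in_map. apply in_seq.
  destruct (Nat.le_gt_cases (h x) (Nat.log2 a)); [lia|].
  rewrite Nat.bits_above_log2 in Hx; [discriminate|lia].
Qed.

Lemma mem_add a (l : list X) : exists a', forall x, mem a' x <-> mem a x \/ In x l.
Proof.
  induction l as [|y l [a' Ha']].
  - exists a; simpl; tauto.
  - exists (Nat.setbit a' (h y)). intro x. unfold mem in *. rewrite Nat.setbit_iff, Ha'.
    simpl. split.
    + intros [E|[H|H]]; auto. right; left. rewrite <- (gh x), <- (gh y); congruence.
    + intros [H|[->|H]]; auto.
Qed.

Lemma mem_ext a a' : (forall x, mem a x <-> mem a' x) -> a = a'.
Proof.
  intros H. apply Nat.bits_inj. intro j. specialize (H (g j)). unfold mem in H.
  rewrite hg in H. destruct (Nat.testbit a j), (Nat.testbit a' j); auto.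
  - symmetry; apply H; auto.
  - apply H; auto.
Qed.

Lemma mem_0 x : ~ mem 0 x.
Proof. unfold mem. rewrite Nat.bits_0. discriminate. Qed.
End Bits.
Section Main.
Context {X : Type} (I tau : (X -> Prop) -> Prop) (F : nat -> X -> Prop)
  (h : X -> nat) (g : nat -> X) (hg : forall j, h (g j) = j) (gh : forall x, g (h x) = x)
  (HI : is_ideal I) (Hq : q_plus I) (Hhm : hereditarily_meager I)
  (Fin : forall i, finite (F i)) (Hd : pairwise_disjoint F)
  (K : Type) (B : K -> X -> Prop) (Hbase : is_base tau K B) (HMA : MA_countable (K * nat))
  (Hcr : I_tau_crowded I tau (big_union F)).

Definition NE k := exists y, big_union F y /\ B k y.

Lemma T_ex k : exists T : X -> Prop, NE k ->
  subset T (big_union F) /\ subset T (B k) /\ positive I T /\ selector T F.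
Proof.
  destruct (classic (NE k)) as [Hne|Hne]; [|exists (fun _ => False); tauto].
  destruct (Hcr (B k) (proj1 Hbase k)) as [He|Hp].
  - exfalso. destruct Hne as [y [H1 H2]]. apply (He y). split; auto.
  - destruct (Hq _ Hp (fun i => inter (F i) (B k))) as [S [HS1 [HS2 HS3]]].
    + intro i. destruct (Fin i) as [l Hl]. exists l. intros x [H1 _]. auto.
    + intros i j x Hij [H1 _] [H2 _]. apply (Hd i j x); auto.
    + intro x. unfold inter, big_union. split.
      * intros [[i Hi] Hb]. exists i; auto.
      * intros [i [Hi Hb]]. split; [exists i|]; auto.
    + exists S. intros _. split; [|split; [|split]].
      * intros x Hx. apply (HS1 x Hx).
      * intros x Hx. apply (HS1 x Hx).
      * auto.
      * intros i x y Hx Hix Hy Hiy. apply (HS3 i x y); auto; split; auto;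
        [apply (HS1 x Hx)|apply (HS1 y Hy)].
Qed.

Definition T k := proj1_sig (constructive_indefinite_description _ (T_ex k)).
Lemma T_spec k : NE k ->
  subset (T k) (big_union F) /\ subset (T k) (B k) /\ positive I (T k) /\ selector (T k) F.
Proof. unfold T. destruct (constructive_indefinite_description _ (T_ex k)); auto. Qed.

Lemma N_ex k : exists N : nat -> (X -> Prop) -> Prop, NE k ->
  (forall n, nowhere_dense_in (T k) (N n)) /\
  (forall Y, subset Y (T k) -> I Y -> exists n, N n Y).
Proof.
  destruct (classic (NE k)) as [Hne|Hne]; [|exists (fun _ _ => False); tauto].
  destruct (T_spec k Hne) as [_ [_ [Hp _]]].
  destruct (Hhm _ Hp) as [N [HN1 HN2]]. exists N. intros _. split; auto.
Qed.

Definition N k := proj1_sig (constructive_indefinite_description _ (N_ex k)).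
Lemma N_spec k : NE k ->
  (forall n, nowhere_dense_in (T k) (N k n)) /\
  (forall Y, subset Y (T k) -> I Y -> exists n, N k n Y).
Proof. unfold N. destruct (constructive_indefinite_description _ (N_ex k)); auto. Qed.

Definition valid (c : nat * nat) : Prop :=
  (forall x, mem h (fst c) x -> big_union F x) /\ selector (mem h (fst c)) F /\
  (forall x, mem h (fst c) x -> ~ mem h (snd c) x).

Definition Pc := {c : nat * nat | valid c}.
Definition ca (p : Pc) := fst (proj1_sig p).
Definition cb (p : Pc) := snd (proj1_sig p).
Definition le (p q : Pc) : Prop :=
  (forall x, mem h (ca q) x -> mem h (ca p) x) /\ (forall x, mem h (cb q) x -> mem h (cb p) x).

Definition Dn (kn : K * nat) (p : Pc) : Prop :=
  NE (fst kn) -> forall Y, subset Y (T (fst kn)) ->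
    (forall x, T (fst kn) x -> mem h (ca p) x -> Y x) ->
    (forall x, T (fst kn) x -> mem h (cb p) x -> ~ Y x) -> ~ N (fst kn) (snd kn) Y.

Lemma dense kn p : exists q, le q p /\ Dn kn q.
Proof.
  destruct kn as [k n].
  destruct (classic (NE k)) as [Hne|Hne];
    [|exists p; split; [split; auto| intro H; contradiction]].
  destruct p as [[a b] [HvA [HvS HvD]]]. unfold Dn, le, ca, cb; cbn [proj1_sig fst snd] in *.
  destruct (T_spec k Hne) as [HTA [HTB [_ HTS]]].
  destruct (N_spec k Hne) as [HNnd _].
  destruct (mem_finite h g gh a) as [la Hla].
  destruct (mem_finite h g gh b) as [lb Hlb].
  destruct (list_filter_ex la (fun x => T k x /\ mem h a x)) as [s0 Hs0].
  destruct (list_blocks_ex F Fin Hd la) as [lbl Hlbl].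
  destruct (list_filter_ex (lb ++ lbl) (fun x => T k x /\ ~ mem h a x /\
      (mem h b x \/ exists y i, mem h a y /\ F i y /\ F i x))) as [t0 Ht0].
  assert (Hbc : basic_cond (T k) s0 t0).
  { split; [|split].
    - intros x Hx. apply Hs0 in Hx. tauto.
    - intros x Hx. apply Ht0 in Hx. tauto.
    - intros x Hx1 Hx2. apply Hs0 in Hx1. apply Ht0 in Hx2. tauto. }
  destruct (HNnd n s0 t0 Hbc) as [s' [t' [[Hs'T [Ht'T Hst']] [Hi1 [Hi2 Hav]]]]].
  destruct (mem_add h g gh a s') as [a' Ha'].
  destruct (mem_add h g gh b t') as [b' Hb'].
  assert (Hv : valid (a', b')).
  { split; [|split]; cbn [fst snd].
    - intros x Hx. apply Ha' in Hx. destruct Hx as [Hx|Hx]; [auto|].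
      exact (HTA x (Hs'T x Hx)).
    - assert (Hmix : forall i x y, mem h a x -> F i x -> In y s' -> F i y -> x = y).
      { intros i x y Hx Hix Hy Hiy. destruct (classic (mem h a y)) as [Hay|Hay].
        - apply (HvS i x y); auto.
        - exfalso. apply (Hst' y Hy). apply Hi2. apply Ht0. split.
          + apply in_or_app; right. apply Hlbl. exists x, i; auto.
          + split; [apply Hs'T; auto|split; auto]. right; exists x, i; auto. }
      intros i x y Hx Hix Hy Hiy. apply Ha' in Hx. apply Ha' in Hy.
      destruct Hx as [Hx|Hx]; destruct Hy as [Hy|Hy].
      + apply (HvS i x y); auto.
      + eapply Hmix; eauto.
      + symmetry; eapply Hmix; eauto.
      + apply (HTS i x y); auto.
    - intros x Hx1 Hx2. apply Ha' in Hx1. apply Hb' in Hx2.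
      destruct Hx1 as [Hx1|Hx1]; destruct Hx2 as [Hx2|Hx2].
      + apply (HvD x); auto.
      + apply (Hst' x); [apply Hi1; apply Hs0; split; [auto|split; [apply Ht'T; auto| auto]] | auto].
      + destruct (classic (mem h a x)) as [Hax|Hax]; [apply (HvD x); auto|].
        apply (Hst' x Hx1). apply Hi2. apply Ht0. split.
        * apply in_or_app; left; auto.
        * split; [apply Hs'T; auto|split; auto].
      + apply (Hst' x); auto. }
  exists (exist _ (a', b') Hv). cbn [proj1_sig fst snd]. split; [split|].
  - intros x Hx; apply Ha'; auto.
  - intros x Hx; apply Hb'; auto.
  - intros _ Y HY Hin Hout. cbn [fst snd] in *. apply Hav; auto. split.
    + intros x Hx. apply Hin; [apply Hs'T; auto| apply Ha'; auto].
    + intros x Hx. apply Hout; [apply Ht'T; auto| apply Hb'; auto].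
Qed.

Lemma main_sec : exists S : X -> Prop,
    subset S (big_union F) /\
    I_tau_crowded I tau S /\
    selector S F /\
    (forall x, closure tau S x <-> closure tau (big_union F) x).
Proof.
  destruct HI as [Hdown [_ [_ Hfin]]].
  destruct (HMA Pc le) with (D := Dn) as [G [[p0 Gp0] [Gup [Gdir Gmeet]]]].
  - constructor. exists (0, 0). split; [|split].
    + intros x Hx; exfalso; apply (mem_0 h x Hx).
    + intros i x y Hx; exfalso; apply (mem_0 h x Hx).
    + intros x Hx; exfalso; apply (mem_0 h x Hx).
  - exists (fun p => to_nat (proj1_sig p)). intros [p Hp] [q Hq'] E. cbn in E.
    assert (p = q). { rewrite <- (cancel_of_to p), <- (cancel_of_to q). congruence. }
    subst q. f_equal. apply proof_irrelevance.
  - intro p; split; auto.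
  - intros p q r [H1 H2] [H3 H4]; split; auto.
  - intros [[a b] Hp] [[a' b'] Hq'] [H1 H2] [H3 H4]. unfold ca, cb in *; cbn in *.
    assert (a = a') by (apply (mem_ext h g hg); firstorder).
    assert (b = b') by (apply (mem_ext h g hg); firstorder).
    subst. f_equal. apply proof_irrelevance.
  - exact dense.
  - set (S := fun x => exists p, G p /\ mem h (ca p) x).
    assert (Hval : forall p, valid (proj1_sig p)) by (intros [c Hc]; exact Hc).
    assert (compat : forall p q x, G p -> G q -> mem h (ca p) x -> mem h (cb q) x -> False).
    { intros p q x Gp Gq H1 H2. destruct (Gdir p q Gp Gq) as [r [Gr [[Hr1 _] [_ Hr2]]]].
      destruct (Hval r) as [_ [_ Hd']]. apply (Hd' x); auto. }
    assert (HSA : subset S (big_union F)).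
    { intros x [p [Gp Hx]]. destruct (Hval p) as [HA _]. apply HA; auto. }
    assert (Hpos : forall k, NE k -> positive I (inter S (B k))).
    { intros k Hne HIk.
      destruct (T_spec k Hne) as [HTA [HTB [_ HTS]]].
      destruct (N_spec k Hne) as [_ Hcov].
      assert (HIT : I (inter S (T k))).
      { apply (Hdown _ _ (fun x (Hx : inter S (T k) x) => conj (proj1 Hx) (HTB x (proj2 Hx))) HIk). }
      destruct (Hcov (inter S (T k))) as [n Hn]; [intros x [_ Hx]; auto| auto|].
      destruct (Gmeet (k, n)) as [p [Gp HDp]].
      apply (HDp Hne (inter S (T k))); auto.
      - intros x [_ Hx]; auto.
      - intros x Hx Hm. split; auto. exists p; auto.
      - intros x Hx Hm [[q [Gq Hq2]] _]. apply (compat q p x); auto. }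
    exists S. split; [|split; [|split]].
    + exact HSA.
    + intros U HU. destruct (classic (exists x, S x /\ U x)) as [[x [Sx Ux]]|Hn].
      * right. destruct (proj2 Hbase U x HU Ux) as [k [Bkx HkU]].
        intro HIU. apply (Hpos k).
        -- exists x; split; auto.
        -- apply (Hdown _ _ (fun y (Hy : inter S (B k) y) => conj (proj1 Hy) (HkU y (proj2 Hy))) HIU).
      * left. intros x [H1 H2]. apply Hn; eauto.
    + intros i x y [p [Gp Hx]] Hix [q [Gq Hy]] Hiy.
      destruct (Gdir p q Gp Gq) as [r [Gr [[Hr1 _] [Hr2 _]]]].
      destruct (Hval r) as [_ [Hs _]]. apply (Hs i x y); auto.
    + intro x. split.
      * intros Hc U HU Ux. destruct (Hc U HU Ux) as [y [Uy Sy]]. exists y; auto.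
      * intros Hc U HU Ux. destruct (proj2 Hbase U x HU Ux) as [k [Bkx HkU]].
        destruct (Hc (B k) (proj1 Hbase k) Bkx) as [y [Bky Ay]].
        assert (Hne : NE k) by (exists y; auto).
        destruct (classic (exists z, S z /\ B k z)) as [[z [Sz Bz]]|Hn].
        -- exists z; auto.
        -- exfalso. apply (Hpos k Hne). apply Hfin. exists []. intros z [H1 H2].
           apply Hn; eauto.
Qed.
End Main.

Lemma MA_prod (K : Type) : below_mc K -> MA_countable (K * nat).
Proof.
  intros Hb. destruct (dichotomy K) as [[f Hf]|[f Hf]].
  - apply RS. exists (fun p => to_nat (f (fst p), snd p)).
    intros [k n] [k' n'] E. cbn [fst snd] in E.
    assert (E2 : (f k, n) = (f k', n')).
    { rewrite <- (cancel_of_to (f k, n)), <- (cancel_of_to (f k', n')). congruence. }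
    injection E2 as H1 H2. apply Hf in H1. subst; auto.
  - apply (Hb _ f Hf).
Qed.

Theorem mainTheorem8 (X : Type) (I tau : (X -> Prop) -> Prop)
  (F : nat -> X -> Prop) :
  countably_infinite X ->
  is_ideal I -> q_plus I -> hereditarily_meager I ->
  is_topology tau -> I_crowded_topology I tau -> weight_below_mc tau ->
  (forall i, finite (F i)) -> pairwise_disjoint F ->
  I_tau_crowded I tau (big_union F) ->
  exists S : X -> Prop,
    subset S (big_union F) /\
    I_tau_crowded I tau S /\
    selector S F /\
    (forall x, closure tau S x <-> closure tau (big_union F) x).
Proof.
  intros [g [Hgi Hgs]] HI Hq Hhm _ _ [K [B [Hbase Hbel]]] Fin Hd Hcr.
  pose (h := fun x => proj1_sig (constructive_indefinite_description _ (Hgs x))).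
  assert (gh : forall x, g (h x) = x).
  { intro x. unfold h. destruct (constructive_indefinite_description _ (Hgs x)); auto. }
  assert (hg : forall j, h (g j) = j) by (intro j; apply Hgi; rewrite gh; auto).
  exact (main_sec I tau F h g hg gh HI Hq Hhm Fin Hd K B Hbase (MA_prod K Hbel) Hcr).
Qed.
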